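(* Let $A\subset\mathbb{R}$ and $a\in\mathbb{R}$. Then the following are equivalent: (i) every function $f:A\to\mathbb{R}$ which has a $T_5$ limit at $a$ has exactly one $T_5$ limit at $a$ (i.e. if $T_5\lim_{x\to a}f(x)=L_1$ and $T_5\lim_{x\to a}f(x)=L_2$ then $L_1=L_2$); (ii) for every real $\delta>0$ the set $\left((a-\delta,a+\delta)\setminus\{a\}\right)\cap A$ is uncountable.
   Context: For $A\subset\mathbb{R}$, $f:A\to\mathbb{R}$ and $a,L\in\mathbb{R}$, one writes $T_5\lim_{x\to a}f(x)=L$ (and says $L$ is a $T_5$ limit of $f$ at $a$) if for every real $\varepsilon>0$ there exists a real $\delta_\varepsilon>0$ such that the set $\left\{x\in\left((a-\delta_{\varepsilon},a+\delta_{\varepsilon})\setminus\{a\}\right)\cap A:\ |f(x)-L|\geq\varepsilon\right\}$ is countable (finite or countably infinite). *)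

(* Defs.v *)
From HB Require Import structures.
From mathcomp Require Import all_boot all_order all_algebra.
From mathcomp Require Import all_classical all_reals.
Set Implicit Arguments. Unset Strict Implicit. Unset Printing Implicit Defensive.
Import Order.TTheory GRing.Theory Num.Theory.
Local Open Scope classical_set_scope.
Local Open Scope ring_scope.

Definition punct_nbhd (R : realType) (A : set R) (a d : R) : set R :=
  [set x | a - d < x < a + d /\ x != a /\ A x].

(* T5 lim_{x -> a} f(x) = L, for f : A -> R (f is given as a function on R,
   only its values on A matter). *)
Definition T5_limit (R : realType) (A : set R) (f : R -> R) (a L : R) : Prop :=
  forall eps : R, 0 < eps -> exists2 d : R, 0 < d &
    countable [set x | punct_nbhd A a d x /\ eps <= `|f x - L|].

(* Main.v *)
Require Import Defs.
From HB Require Import structures.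
From mathcomp Require Import all_boot all_order all_algebra.
From mathcomp Require Import all_classical all_reals.
From mathcomp Require Import ring lra.
Import Order.TTheory GRing.Theory Num.Theory.
Local Open Scope classical_set_scope.
Local Open Scope ring_scope.

Lemma cntU {T} {S1 S2 : set T} : countable S1 -> countable S2 -> countable (S1 `|` S2).
Proof.
move=> c1 c2.
have -> : S1 `|` S2 = \bigcup_(b in [set: bool]) (if b then S1 else S2).
  apply/seteqP; split => x.
    by case=> h; [exists true | exists false].
  by case=> -[] _ /= h; [left | right].
by apply: bigcup_countable => // -[].
Qed.

Lemma cntS {T} {A B : set T} : A `<=` B -> countable B -> countable A.
Proof. by move=> AB; apply: sub_countable; apply: subset_card_le. Qed.

Theorem theorem2 (R : realType) (A : set R) (a : R) :
  (forall f : R -> R, forall L1 L2 : R,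
     T5_limit A f a L1 -> T5_limit A f a L2 -> L1 = L2)
  <->
  (forall d : R, 0 < d -> ~ countable (punct_nbhd A a d)).
Proof.
split.
  move=> H d d0 cd.
  have T : forall L, T5_limit A (fun=> 0) a L.
    move=> L e e0; exists d => //.
    by apply: cntS cd => x [].
  have := H (fun=> 0) 0 1 (T 0) (T 1).
  by move=> /eqP; rewrite eq_sym oner_eq0.
move=> H f L1 L2 h1 h2.
apply/eqP; rewrite -subr_eq0; apply/negPn/negP => ne.
have [e e0 ee] : exists2 e : R, 0 < e & `|L1 - L2| = e + e.
  exists (`|L1 - L2| / 2); last exact: splitr.
  by rewrite divr_gt0 // normr_gt0.
have [d1 d10 c1] := h1 e e0.
have [d2 d20 c2] := h2 e e0.
apply: (H (Num.min d1 d2)); first by rewrite lt_min d10 d20.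
apply: (cntS _ (cntU c1 c2)) => x [/andP[xl xr] [xa Ax]].
have m1 : Num.min d1 d2 <= d1 by rewrite ge_min lexx.
have m2 : Num.min d1 d2 <= d2 by rewrite ge_min lexx orbT.
have P1 : punct_nbhd A a d1 x.
  split; last by split.
  apply/andP; split.
    by apply: le_lt_trans xl; rewrite lerD2l lerN2.
  by apply: (lt_le_trans xr); rewrite lerD2l.
have P2 : punct_nbhd A a d2 x.
  split; last by split.
  apply/andP; split.
    by apply: le_lt_trans xl; rewrite lerD2l lerN2.
  by apply: (lt_le_trans xr); rewrite lerD2l.
have [g|g] := leP e `|f x - L1|; first by left.
right; split => //.
have := ler_normB (f x - L2) (f x - L1).
have -> : f x - L2 - (f x - L1) = L1 - L2 by rewrite opprB addrC addrA subrK.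
rewrite ee.
move: g => ue h; rewrite -(lerD2r e); apply: (le_trans h).
by rewrite lerD2l ltW.
Qed.
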